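(* With all notation and hypotheses as below, for every $(A_0,\dots,A_N)\in(X^* )^{N+1}$ and $(B_0,\dots,B_N)\in X^{N+1}$, define $C_0=u_NA_N$, $C_{N-i}-C_{N-i-1}=u_i(A_i-A_{i+1})$ for $i=0,\dots,N-1$ (with $A_{N+1}=0$), and $D_i=B_{N-i}$ for $i=0,\dots,N$. Then \[ \mathbf{U}_{\mathcal A}(A_0,\dots,A_N,B_0,\dots,B_N)=\mathbf{V}_{\mathcal B}(C_0,\dots,C_N,D_0,\dots,D_N), \] and the map $(A,B)\mapsto(C,D)$ is a bijection of $(X^* )^{N+1}\times X^{N+1}$ onto itself.
   Context: $X$ is a reflexive Banach space with norm $\|\cdot\|$, dual $X^*$ with dual norm $\|\cdot\|_*$ and pairing $\langle\cdot,\cdot\rangle$; $L>0$, $\sigma>0$, $N\ge1$; coefficients $\{a_{k,i}\}_{0\le i<k\le N}$, $\{b_{k,i}\}_{0\le i\le k\le N}$ are real with convention $b_{0,0}=-1$; $\{u_i\}_{i=0}^N$ is a positive nondecreasing real sequence and $v_i=1/u_{N-i}$. For $(A,B)$: $A_{N+1}=0$, $x_0=B_0$, $x_{k+1}=x_k-\sum_{i=0}^{k+1}b_{k+1,i}B_i$, and $\mathbf{U}_{\mathcal A}=\sum_{k=0}^{N-1}\frac{u_k}{2L}\|A_k-A_{k+1}\|_*^2+\sum_{k=0}^{N-1}\frac{\sigma}{2}\|B_k-B_{k+1}\|^2+\sum_{k=0}^{N-1}\langle\sum_{i=0}^{k}a_{k+1,i}A_i,B_{k+1}\rangle-\sum_{k=0}^{N}u_k\langle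 A_k-A_{k+1},x_k\rangle$. For $(C,D)$: $\mathbf{V}_{\mathcal B}=\sum_{k=0}^{N-1}\frac{v_{k+1}}{2L}\|C_k-C_{k+1}\|_*^2+\sum_{k=0}^{N-1}\frac{\sigma}{2}\|D_k-D_{k+1}\|^2+\sum_{k=0}^{N}\langle\sum_{i=0}^{k}b_{N-i,N-k}C_i,D_k\rangle+\sum_{k=0}^{N-1}\langle v_{k+1}C_{k+1}-\sum_{j=0}^{k}(v_{j+1}-v_j)C_j,\sum_{i=0}^{k}a_{N-i,N-1-k}D_i\rangle$. *)

(* Defs.v *)
From HB Require Import structures.
From mathcomp Require Import all_boot all_order all_algebra.
From mathcomp Require Import all_classical all_reals all_analysis.
Set Implicit Arguments. Unset Strict Implicit. Unset Printing Implicit Defensive.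
Import Order.TTheory GRing.Theory Num.Theory.
Import numFieldNormedType.Exports.
Local Open Scope classical_set_scope.
Local Open Scope ring_scope.

Section Dual.
Variables (R : realType) (X : normedModType R).

(* elements of the topological dual X* (continuous linear functionals): continuous linear functionals X -> R;
   X^* is represented inside the function space X -> R *)
Definition is_dual (f : X -> R) : Prop :=
  (forall (c : R) (x y : X), f (c *: x + y) = c * f x + f y) /\ continuous f.

Definition dnorm (f : X -> R) : R :=
  sup [set `|f x| | x in [set x : X | `|x| <= 1]].

(* reflexivity: the canonical embedding J : X -> X^**, (J x) f = f x, is onto
   the bidual X^** (linear functionals on X^* bounded for the dual norm) *)
Definition is_bidual (phi : (X -> R) -> R) : Prop :=
  (forall (c : R) (f g : X -> R), is_dual f -> is_dual g ->
      phi (c *: f + g) = c * phi f + phi g) /\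
  (exists M : R, forall f, is_dual f -> `|phi f| <= M * dnorm f).

Definition reflexive_space : Prop :=
  forall phi, is_bidual phi -> exists x : X, forall f, is_dual f -> phi f = f x.

End Dual.

Section Seqs.
Variables (R : realType) (X : normedModType R) (N : nat).

(* extension of a vector indexed by {0..N} to nat, zero beyond N
   (this realizes the convention A_{N+1} = 0) *)
Definition ext (T : zmodType) (A : 'I_N.+1 -> T) (k : nat) : T :=
  if (k < N.+1)%N then A (inord k) else 0.

Fixpoint xseq (b : nat -> nat -> R) (B : nat -> X) (k : nat) : X :=
  match k with
  | 0 => B 0
  | k'.+1 => xseq b B k' - \sum_(i < k'.+2) b k'.+1 i *: B i
  end.

Definition Ufun (L sigma : R) (a b : nat -> nat -> R) (u : nat -> R)
    (A0 : 'I_N.+1 -> (X -> R)) (B0 : 'I_N.+1 -> X) : R :=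
  let A := ext A0 in let B := ext B0 in let x := xseq b B in
  \sum_(k < N) (u k / (2 * L)) * dnorm (A k - A k.+1) ^+ 2
  + \sum_(k < N) (sigma / 2) * `|B k - B k.+1| ^+ 2
  + \sum_(k < N) (\sum_(i < k.+1) a k.+1 i *: A i) (B k.+1)
  - \sum_(k < N.+1) u k * (A k - A k.+1) (x k).

Definition vseq (u : nat -> R) (i : nat) : R := 1 / u (N - i)%N.

Definition Vfun (L sigma : R) (a b : nat -> nat -> R) (u : nat -> R)
    (C0 : 'I_N.+1 -> (X -> R)) (D0 : 'I_N.+1 -> X) : R :=
  let C := ext C0 in let D := ext D0 in let v := vseq u in
  \sum_(k < N) (v k.+1 / (2 * L)) * dnorm (C k - C k.+1) ^+ 2
  + \sum_(k < N) (sigma / 2) * `|D k - D k.+1| ^+ 2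
  + \sum_(k < N.+1) (\sum_(i < k.+1) b (N - i)%N (N - k)%N *: C i) (D k)
  + \sum_(k < N) (v k.+1 *: C k.+1 - \sum_(j < k.+1) (v j.+1 - v j) *: C j)
                   (\sum_(i < k.+1) a (N - i)%N (N - 1 - k)%N *: D i).

(* C_0 = u_N A_N,  C_{m+1} = C_m + u_{N-m-1} (A_{N-m-1} - A_{N-m}),
   i.e. C_{N-i} - C_{N-i-1} = u_i (A_i - A_{i+1}) *)
Fixpoint Cseq (u : nat -> R) (A : nat -> (X -> R)) (m : nat) : X -> R :=
  match m with
  | 0 => u N *: A N
  | m'.+1 => Cseq u A m' + u (N - m'.+1)%N *: (A (N - m'.+1)%N - A (N - m')%N)
  end.

Definition ABtoCD (u : nat -> R)
    (p : ('I_N.+1 -> (X -> R)) * ('I_N.+1 -> X)) :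
    ('I_N.+1 -> (X -> R)) * ('I_N.+1 -> X) :=
  (fun i : 'I_N.+1 => Cseq u (ext p.1) i,
   fun i : 'I_N.+1 => p.2 (inord (N - i)%N)).

Definition dualPairs : set (('I_N.+1 -> (X -> R)) * ('I_N.+1 -> X)) :=
  [set p | forall i, is_dual (p.1 i)].

End Seqs.

(* Main.v *)
Require Import Defs.
From HB Require Import structures.
From mathcomp Require Import all_boot all_order all_algebra.
From mathcomp Require Import all_classical all_reals all_analysis.
From mathcomp Require Import ring lra zify.
Import Order.TTheory GRing.Theory Num.Theory.
Import numFieldNormedType.Exports.
Local Open Scope classical_set_scope.
Local Open Scope ring_scope.
Section F.
Variables (R: realType) (X : normedModType R).
Implicit Types (f g : X -> R).
Lemma fD f g x : (f + g) x = f x + g x. Proof. by []. Qed.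
Lemma fN f x : (- f) x = - f x. Proof. by []. Qed.
Lemma fB f g x : (f - g) x = f x - g x. Proof. by []. Qed.
Lemma fZ (c : R) f x : (c *: f) x = c * f x. Proof. by []. Qed.
Lemma f0 x : (0 : X -> R) x = 0. Proof. by []. Qed.
Lemma fS I r (P : pred I) (F : I -> X -> R) x :
  (\sum_(i <- r | P i) F i) x = \sum_(i <- r | P i) F i x.
Proof. by rewrite fct_sumE. Qed.

Lemma dual0 {f} : is_dual f -> f 0 = 0.
Proof. move=> [h _]; have := h 1 0 0; rewrite scale1r addr0 mul1r; lra. Qed.
Lemma dualD {f} x y : is_dual f -> f (x + y) = f x + f y.
Proof. by move=> [h _]; rewrite -[x]scale1r h mul1r scale1r. Qed.
Lemma dualZ {f} c x : is_dual f -> f (c *: x) = c * f x.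
Proof. move=> hf; have := hf.1 c x 0; rewrite addr0 (dual0 hf) addr0; by []. Qed.
Lemma dualS {f} I r (P : pred I) (F : I -> X) : is_dual f ->
  f (\sum_(i <- r | P i) F i) = \sum_(i <- r | P i) f (F i).
Proof.
move=> hf; apply: (big_morph f (fun x y => dualD x y hf) (dual0 hf)).
Qed.

Lemma is_dual0 : is_dual (0 : X -> R).
Proof. split=> [c x y|]; first by rewrite !f0 mulr0 addr0. exact: cst_continuous. Qed.
Lemma is_dualD f g : is_dual f -> is_dual g -> is_dual (f + g).
Proof.
move=> [hf cf] [hg cg]; split=> [c x y|x]; first by rewrite !fD hf hg; lra.
apply: continuousD; [exact: cf|exact: cg].
Qed.
Lemma is_dualN f : is_dual f -> is_dual (- f).
Proof.
move=> [hf cf]; split=> [c x y|x]; first by rewrite !fN hf; lra.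
apply: continuousN; exact: cf.
Qed.
Lemma is_dualB f g : is_dual f -> is_dual g -> is_dual (f - g).
Proof. by move=> hf hg; apply: is_dualD => //; apply: is_dualN. Qed.
Lemma is_dualZ (k : R) f : is_dual f -> is_dual (k *: f).
Proof.
move=> [hf cf]; split=> [c x y|x]; first by rewrite !fZ hf; lra.
apply: continuousZl_tmp; exact: cf.
Qed.
Lemma is_dualS I r (P : pred I) (F : I -> X -> R) :
  (forall i, P i -> is_dual (F i)) -> is_dual (\sum_(i <- r | P i) F i).
Proof.
move=> h; apply: (big_ind (@is_dual R X)); [exact: is_dual0 | exact: is_dualD | exact: h].
Qed.

Lemma dnormN f : dnorm (- f) = dnorm f.
Proof.
rewrite /dnorm; congr sup; apply/seteqP; split=> _ [x hx <-]; exists x => //;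
by rewrite fN normrN.
Qed.

Lemma dnormZ (c : R) f : 0 < c -> dnorm (c *: f) = c * dnorm f.
Proof.
move=> c0; rewrite /dnorm.
set S := [set `|f x| | x in _]; set S' := [set _ | x in _].
have S0 : S !=set0 by exists `|f 0|; exists 0 => //=; rewrite normr0.
have S'0 : S' !=set0 by exists `|(c *: f) 0|; exists 0 => //=; rewrite normr0.
have memS' : forall y, S y -> S' (c * y).
  by move=> _ [x hx <-]; exists x => //; rewrite fZ normrM gtr0_norm.
have memS : forall z, S' z -> S (z / c).
  move=> _ [x hx <-]; exists x => //; rewrite fZ normrM gtr0_norm //.
  by rewrite mulrC mulKf // gt_eqF.
have [hs|hs] := pselect (has_sup S).
  have hs' : has_sup S'.
    split => //; exists (c * sup S) => _ [x hx <-].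
    rewrite fZ normrM gtr0_norm // ler_pM2l //.
    by apply: sup_upper_bound => //; exists x.
  apply/eqP; rewrite eq_le; apply/andP; split.
    apply: ge_sup => // _ [x hx <-]; rewrite fZ normrM gtr0_norm // ler_pM2l //.
    by apply: sup_upper_bound => //; exists x.
  rewrite -ler_pdivlMl // mulrC; apply: ge_sup => // y Sy.
  rewrite ler_pdivlMr // mulrC; apply: sup_upper_bound => //; exact: memS'.
have hs' : ~ has_sup S'.
  move=> [_ [M hM]]; apply: hs; split => //; exists (M / c) => y Sy.
  by rewrite ler_pdivlMr // mulrC; apply: hM; exact: memS'.
by rewrite !sup_out // mulr0.
Qed.
End F.
Arguments dual0 {R X f}.
Arguments dualD {R X f}.
Arguments dualZ {R X f}.
Arguments dualS {R X f I r P F}.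
Lemma dualSo {R : realType} {X : normedModType R} {f : X -> R} n (F : 'I_n -> X) :
  is_dual f -> f (\sum_(i < n) F i) = \sum_(i < n) f (F i).
Proof. by move=> hf; rewrite (dualS hf). Qed.
Lemma dualN {R : realType} {X : normedModType R} {f : X -> R} x :
  is_dual f -> f (- x) = - f x.
Proof. by move=> hf; rewrite -scaleN1r dualZ // mulN1r. Qed.

Lemma sum_rev {R : realType} (F : nat -> R) n :
  \sum_(k < n) F (n - k.+1)%N = \sum_(k < n) F k.
Proof. by rewrite -(big_mkord xpredT F) big_rev_mkord subn0. Qed.

Lemma widen {R : realType} (H : nat -> R) k n : (k <= n)%N ->
  \sum_(j < k) H j = \sum_(j < n) (if (j < k)%N then H j else 0).
Proof. by move=> hk; rewrite (big_ord_widen n H hk) big_mkcond. Qed.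

Lemma sq2 {R : realType} (F : nat -> nat -> R) n :
  \sum_(k < n) \sum_(i < n) F (n - i.+1)%N (n - k.+1)%N
  = \sum_(k < n) \sum_(i < n) F k i.
Proof.
rewrite exchange_big /=.
rewrite (sum_rev (fun i => \sum_(k < n) F i (n - k.+1)%N)) /=.
by apply: eq_bigr => i _; rewrite (sum_rev (fun k => F i k)).
Qed.

Lemma cube3 {R : realType} (F : nat -> nat -> nat -> R) n :
  \sum_(k < n) \sum_(i < n) \sum_(m < n) F (n - m.+1)%N (n - i.+1)%N (n - k.+1)%N
  = \sum_(k < n) \sum_(j < n) \sum_(i < n) F k j i.
Proof.
rewrite exchange_big /=.
under eq_bigr => i _ do rewrite exchange_big /=.
rewrite exchange_big /=.
rewrite (sum_rev (fun m => \sum_(i < n) \sum_(k < n) F m (n - i.+1)%N (n - k.+1)%N)).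
apply: eq_bigr => m _.
rewrite (sum_rev (fun i => \sum_(k < n) F m i (n - k.+1)%N)).
by apply: eq_bigr => i _; rewrite (sum_rev (fun k => F m i k)).
Qed.

Section Nat.
Variables (R : realType) (X : normedModType R) (N : nat) (u : nat -> R).
Hypothesis hu : forall i, (i <= N)%N -> 0 < u i.

Lemma ext_lt {T : zmodType} (A0 : 'I_N.+1 -> T) k :
  (k < N.+1)%N -> ext A0 k = A0 (inord k).
Proof. by rewrite /ext => ->. Qed.
Lemma ext_ge {T : zmodType} (A0 : 'I_N.+1 -> T) k :
  (N.+1 <= k)%N -> ext A0 k = 0.
Proof. by move=> h; rewrite /ext ltnNge h. Qed.
Lemma ext_dual (A0 : 'I_N.+1 -> X -> R) :
  (forall i, is_dual (A0 i)) -> forall k, is_dual (ext A0 k).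
Proof. by move=> h k; rewrite /ext; case: ifP => _; [exact: h|exact: is_dual0]. Qed.

Lemma CseqE (A : nat -> X -> R) : A N.+1 = 0 -> forall i, (i <= N)%N ->
  Cseq N u A i = \sum_(m < i.+1) u (N - m)%N *: (A (N - m)%N - A (N - m).+1).
Proof.
move=> hA; elim=> [_|i IH hi].
  by rewrite big_ord1 /= subn0 hA subr0.
rewrite /= IH ?(ltnW hi) // [in RHS]big_ord_recr /= subnSK //.
Qed.

Lemma Cseq_dual (A : nat -> X -> R) : (forall k, is_dual (A k)) ->
  forall i, is_dual (Cseq N u A i).
Proof.
move=> h; elim=> [|i IH] /=; first exact: is_dualZ.
by apply: is_dualD => //; apply: is_dualZ; apply: is_dualB.
Qed.

Lemma vuK n : (n <= N)%N -> vseq N u n * u (N - n)%N = 1.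
Proof. by move=> hn; rewrite /vseq mul1r mulVf // gt_eqF // hu // leq_subr. Qed.

Lemma EseqE (A : nat -> X -> R) n : (n <= N)%N ->
  vseq N u n *: Cseq N u A n
  - \sum_(j < n) (vseq N u j.+1 - vseq N u j) *: Cseq N u A j = A (N - n)%N.
Proof.
elim: n => [_|n IH hn].
  by rewrite big_ord0 subr0 /= scalerA -{2}(subn0 N) vuK // scale1r subn0.
apply/funext => x.
have IHx := congr1 (fun f => f x) (IH (ltnW hn)); move: IHx => /=.
have hv := @vuK n.+1 hn.
rewrite big_ord_recr /= !(fB, fD, fZ, fS) => IHx.
rewrite mulrDr mulrA hv mul1r; lra.
Qed.

End Nat.

Section Inv.
Variables (R : realType) (X : normedModType R) (N : nat) (u : nat -> R).
Hypothesis hu : forall i, (i <= N)%N -> 0 < u i.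

Definition Efun (C : nat -> X -> R) n :=
  vseq N u n *: C n - \sum_(j < n) (vseq N u j.+1 - vseq N u j) *: C j.

Lemma Efun_dual C : (forall k, is_dual (C k)) -> forall n, is_dual (Efun C n).
Proof.
move=> h n; apply: is_dualB; first exact: is_dualZ.
by apply: is_dualS => j _; apply: is_dualZ.
Qed.

Lemma Cseq_inv (C A : nat -> X -> R) :
  (forall m, (m <= N)%N -> A m = Efun C (N - m)%N) ->
  forall k, (k <= N)%N -> Cseq N u A k = C k.
Proof.
move=> hA; elim=> [_|k IH hk] /=.
  rewrite hA // subnn /Efun big_ord0 subr0 scalerA mulrC.
  by have := @vuK R N u hu 0 (leq0n _); rewrite subn0 => ->; rewrite scale1r.
rewrite (IH (ltnW hk)) !hA ?leq_subr // subKn // subKn ?(ltnW hk) //.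
have -> : Efun C k.+1 - Efun C k = vseq N u k.+1 *: (C k.+1 - C k).
  apply/funext => x; rewrite /Efun big_ord_recr /= !(fB, fD, fZ, fS); lra.
rewrite scalerA mulrC (@vuK R N u hu k.+1 hk) scale1r.
by rewrite addrC subrK.
Qed.

End Inv.
Theorem mainTheorem3 (R : realType) (X : completeNormedModType R)
  (L sigma : R) (N : nat) (a b : nat -> nat -> R) (u : nat -> R) :
  @reflexive_space R X ->
  0 < L -> 0 < sigma -> (1 <= N)%N ->
  b 0%N 0%N = -1 ->
  (forall i, (i <= N)%N -> 0 < u i) ->
  (forall i j, (i <= j <= N)%N -> u i <= u j) ->
  (forall (A : 'I_N.+1 -> (X -> R)) (B : 'I_N.+1 -> X),
     (forall i, is_dual (A i)) ->
     Ufun L sigma a b u A B =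
     Vfun L sigma a b u (ABtoCD u (A, B)).1 (ABtoCD u (A, B)).2)
  /\ set_bij (@dualPairs R X N) (@dualPairs R X N) (ABtoCD u).
Proof.
move=> _ L0 s0 N1 b00 hu _; split.
  move=> A0 B0 hA0.
  rewrite /Ufun /Vfun /ABtoCD /=.
  set A := ext A0. set B := ext B0.
  set C := ext (fun i : 'I_N.+1 => Cseq N u A i).
  set D := ext (fun i : 'I_N.+1 => B0 (inord (N - i))).
  have hA1 : A N.+1 = 0 by rewrite /A ext_ge.
  have hAd : forall k, is_dual (A k) by apply: ext_dual.
  have hC : forall k, (k < N.+1)%N -> C k = Cseq N u A k.
    by move=> k hk; rewrite /C ext_lt // inordK.
  have hD : forall k, (k < N.+1)%N -> D k = B (N - k)%N.
    move=> k hk; rewrite /D ext_lt // inordK // /B ext_lt //.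
    by rewrite ltnS leq_subr.
  have E1 : \sum_(k < N) vseq N u k.+1 / (2 * L) * dnorm (C k - C k.+1) ^+ 2
          = \sum_(k < N) u k / (2 * L) * dnorm (A k - A k.+1) ^+ 2.
    rewrite -(sum_rev (fun k => u k / (2 * L) * dnorm (A k - A k.+1) ^+ 2)).
    apply: eq_bigr => [[k hk]] _ /=.
    rewrite hC ?hC 1?ltnS ?(ltnW hk) //.
    rewrite [Cseq _ _ _ k.+1]/= opprD addrA subrr add0r dnormN dnormZ ?hu ?leq_subr //.
    rewrite subnSK // /vseq.
    have := hu (N - k.+1)%N (leq_subr _ _) => hu'.
    field; apply/andP; split; [exact: lt0r_neq0 | exact: lt0r_neq0].
  have E2 : \sum_(k < N) sigma / 2 * `|D k - D k.+1| ^+ 2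
          = \sum_(k < N) sigma / 2 * `|B k - B k.+1| ^+ 2.
    rewrite -(sum_rev (fun k => sigma / 2 * `|B k - B k.+1| ^+ 2)).
    apply: eq_bigr => [[k hk]] _ /=.
    by rewrite hD ?hD 1?ltnS ?(ltnW hk) // subnSK // distrC.

  have hx : forall k, xseq b B k = - \sum_(j < k.+1) \sum_(i < j.+1) b j i *: B i.
    elim=> [|k IH] /=; first by rewrite !big_ord1 b00 scaleN1r opprK.
    by rewrite IH [in RHS]big_ord_recr /= opprD.
  pose T (k j i : nat) := if ((i <= j) && (j <= k))%N
    then u k * (b j i * (A k - A k.+1) (B i)) else 0.
  have E3a : \sum_(k < N.+1) u k * (A k - A k.+1) (xseq b B k)
      = - \sum_(k < N.+1) \sum_(j < N.+1) \sum_(i < N.+1) T k j i.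
    rewrite -sumrN; apply: eq_bigr => [[k hk]] _ /=.
    have hf : is_dual (A k - A k.+1) by apply: is_dualB.
    rewrite hx (dualN _ hf) (dualSo _ _ hf) (widen (fun j => (A k - A k.+1) (\sum_(i < j.+1) b j i *: B i)) _ _ hk) mulrN mulr_sumr; congr (- _).
    apply: eq_bigr => [[j hj]] _ /=; case: ifP => hjk.
      rewrite (dualSo _ _ hf) (widen (fun i => (A k - A k.+1) (b j i *: B i)) _ _ hj) mulr_sumr; apply: eq_bigr => [[i hi]] _ /=.
      rewrite /T; case: ifP => hij; last by rewrite mulr0 ifF //; apply/negbTE; lia.
      rewrite ifT; last by lia.
      by rewrite (dualZ _ _ hf).
    by rewrite mulr0 big1 // => i _; rewrite /T ifF //; apply/negbTE; lia.
  have E3b : \sum_(k < N.+1) (\sum_(i < k.+1) b (N - i)%N (N - k)%N *: C i) (D k)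
      = \sum_(k < N.+1) \sum_(j < N.+1) \sum_(i < N.+1) T k j i.
    rewrite -cube3; apply: eq_bigr => [[k hk]] _ /=.
    rewrite fS (widen (fun i => (b (N - i)%N (N - k)%N *: C i) (D k)) _ _ hk).
    apply: eq_bigr => [[i hi]] _ /=.
    case: ifP => hik; last first.
      by rewrite big1 // => m _; rewrite /T ifF //; apply/negbTE; lia.
    rewrite fZ hC // hD // (@CseqE R X N u A hA1 i) ?(ltnW hi) // fS.
    rewrite (widen (fun m => (u (N - m)%N *: (A (N - m)%N - A (N - m)%N.+1)) (B (N - k)%N)) _ _ hi).
    rewrite mulr_sumr; apply: eq_bigr => [[m hm]] _ /=.
    rewrite /T !subSS; case: ifP => hmi.
      rewrite ifT; last by lia.
      by rewrite fZ; ring.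
    by rewrite mulr0 ifF //; apply/negbTE; lia.
  have E3 : \sum_(k < N.+1) (\sum_(i < k.+1) b (N - i)%N (N - k)%N *: C i) (D k)
     = - \sum_(k < N.+1) u k * (A k - A k.+1) (xseq b B k) by rewrite E3a E3b opprK.

  pose G (k i : nat) := if (i <= k)%N then a k.+1 i * A i (B k.+1) else 0.
  have E4a : \sum_(k < N) (\sum_(i < k.+1) a k.+1 i *: A i) (B k.+1)
      = \sum_(k < N) \sum_(i < N) G k i.
    apply: eq_bigr => [[k hk]] _ /=.
    rewrite fS (widen (fun i => (a k.+1 i *: A i) (B k.+1)) _ _ hk).
    by apply: eq_bigr => [[i hi]] _ /=; rewrite /G fZ.
  have E4b : \sum_(k < N)
     (vseq N u k.+1 *: C k.+1 -
      \sum_(j < k.+1) (vseq N u j.+1 - vseq N u j) *: C j)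
       (\sum_(i < k.+1) a (N - i)%N (N - 1 - k)%N *: D i)
      = \sum_(k < N) \sum_(i < N) G k i.
    rewrite -sq2; apply: eq_bigr => [[k hk]] _ /=.
    rewrite hC ?ltnS //.
    rewrite (eq_bigr (fun j : 'I_k.+1 => (vseq N u j.+1 - vseq N u j) *: Cseq N u A j));
      last by move=> [j hj] _ /=; rewrite hC //; lia.
    rewrite (@EseqE R X N u hu A k.+1 hk).
    rewrite (dualSo _ _ (hAd _)).
    rewrite (widen (fun i => A (N - k.+1)%N (a (N - i)%N (N - 1 - k)%N *: D i)) _ _ hk).
    apply: eq_bigr => [[i hi]] _ /=.
    rewrite /G; case: ifP => hik.
      rewrite ifT; last by lia.
      rewrite (dualZ _ _ (hAd _)) hD; last by lia.
      have -> : (N - 1 - k = N - k.+1)%N by lia.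
      by have -> : ((N - i.+1).+1 = N - i)%N by lia.
    by rewrite ifF //; apply/negbTE; lia.
  rewrite E1 E2 E3 E4b -E4a; lra.

split.
- move=> [A0 B0] /= hA i /=.
  by apply: Cseq_dual; apply: ext_dual.
- move=> [A0 B0] [A1 B1] /= hA hA' heq.
  have h1 := congr1 fst heq; have h2 := congr1 snd heq; move: h1 h2 => /= h1 h2.
  have hc : forall j, (j < N.+1)%N -> Cseq N u (ext A0) j = Cseq N u (ext A1) j.
    by move=> j hj; have := congr1 (fun f => f (inord j)) h1; rewrite /= inordK.
  have hE : forall (A : 'I_N.+1 -> X -> R) (i : 'I_N.+1),
      A i = @Efun R X N u (Cseq N u (ext A)) (N - i)%N.
    move=> A i; have hi : (i <= N)%N by rewrite -ltnS.
    rewrite /Efun (@EseqE R X N u hu (ext A) (N - i)%N (leq_subr _ _)) (subKn hi).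
    by rewrite /ext ltn_ord inord_val.
  congr pair; apply/funext => i; have hi : (i <= N)%N by rewrite -ltnS.
    rewrite (hE A0) (hE A1) /Efun hc ?ltnS ?leq_subr //.
    congr (_ - _); apply: eq_bigr => [[j hj]] _ /=; rewrite hc //; lia.
  have := congr1 (fun f => f (inord (N - i))) h2.
  by rewrite /= inordK ?ltnS ?leq_subr // (subKn hi) inord_val.
- move=> [C0 D0] hC.
  pose A0 := fun i : 'I_N.+1 => @Efun R X N u (ext C0) (N - i)%N.
  pose B0 := fun i : 'I_N.+1 => D0 (inord (N - i)).
  exists (A0, B0).
    move=> i /=; apply: Efun_dual; apply: ext_dual; exact: hC.
  rewrite /ABtoCD /=; congr pair; apply/funext => i; have hi : (i <= N)%N by rewrite -ltnS.
    rewrite (@Cseq_inv R X N u hu (ext C0) (ext A0)) //.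
      by rewrite /ext ltn_ord inord_val.
    by move=> m hm; rewrite /ext ltnS hm /A0 inordK.
  by rewrite /B0 inordK ?ltnS ?leq_subr // (subKn hi) inord_val.
Qed.
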